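(* Let $\mathbb C^2_*=\mathbb C^2\setminus\{0\}$, $\Delta$ the open unit disc, and $\phi(v)=\frac{v+1/2}{1+v/2}$. Let $\mathbb Z$ act on $\mathbb C^2_*\times\Delta$ by $n\cdot(z,v)=(2^nz,\phi^n(v))$ and let $\Omega=(\mathbb C^2_*\times\Delta)/\mathbb Z$ (a flat disc bundle over the Hopf surface). Let $A=\Delta/\{\phi^n:n\in\mathbb Z\}$. Then $\Omega$ is biholomorphic to the product $A\times\mathbb C^2_*$. *)

(* Defs.v *)
From mathcomp Require Import all_boot all_order all_algebra.
From mathcomp Require Import all_classical all_reals all_analysis.
From mathcomp Require Import complex.
Import numFieldNormedType.Exports.

Set Implicit Arguments.
Unset Strict Implicit.
Unset Printing Implicit Defensive.

Import GRing.Theory Num.Theory.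
Local Open Scope ring_scope.
Local Open Scope classical_set_scope.

(* The complex numbers, seen as a numFieldType so that it (and 'rV[C]_n)
   carries MathComp-Analysis normed-module structures over C itself;
   hence [differentiable] below is complex (C-linear) Frechet
   differentiability, i.e. holomorphy. *)
Definition C (R : realType) : numFieldType := R[i].

Definition co (R : realType) (p : 'rV[C R]_3) (k : nat) : C R := p ord0 (inord k).

Definition phi (R : realType) (v : C R) : C R := (v + 2^-1) / (1 + v / 2).
Definition phi_inv (R : realType) (v : C R) : C R := (v - 2^-1) / (1 - v / 2).

Definition phi_pow (R : realType) (n : int) : C R -> C R :=
  match n with
  | Posz k => iter k (@phi R)
  | Negz k => iter k.+1 (@phi_inv R)
  end.

(* C^2_* x Delta, embedded in C^3 as (z1, z2, v). *)
Definition Xdom (R : realType) : set 'rV[C R]_3 :=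
  [set p | (co p 0 != 0 \/ co p 1 != 0) /\ `|co p 2| < 1].

Definition Xrel (R : realType) (p p' : 'rV[C R]_3) : Prop :=
  exists n : int, [/\ co p' 0 = (2 : C R) ^ n * co p 0,
                      co p' 1 = (2 : C R) ^ n * co p 1 &
                      co p' 2 = phi_pow n (co p 2)].

(* Delta x C^2_*, embedded in C^3 as (v, z1, z2). *)
Definition Ydom (R : realType) : set 'rV[C R]_3 :=
  [set q | `|co q 0| < 1 /\ (co q 1 != 0 \/ co q 2 != 0)].

(* Orbit relation of Z acting by phi^n on the Delta factor only;
   the quotient is A x C^2_* with A = Delta / <phi>. *)
Definition Yrel (R : realType) (q q' : 'rV[C R]_3) : Prop :=
  exists n : int, [/\ co q' 0 = phi_pow n (co q 0),
                      co q' 1 = co q 1 &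
                      co q' 2 = co q 2].

(* A map of representatives f : V -> W induces a well-defined map of
   quotients X/~ -> Y/~ . *)
Definition qwell_defined (R : realType) (V W : normedModType (C R))
  (X : set V) (eX : V -> V -> Prop) (Y : set W) (eY : W -> W -> Prop)
  (f : V -> W) : Prop :=
  (forall x, X x -> Y (f x)) /\
  (forall x x', X x -> X x' -> eX x x' -> eY (f x) (f x')).

(* The induced map of quotients is holomorphic: in the charts given by the
   (local biholomorphic) projections X -> X/~ and Y -> Y/~, it is locally
   represented by holomorphic maps. *)
Definition qholomorphic (R : realType) (V W : normedModType (C R))
  (X : set V) (Y : set W) (eY : W -> W -> Prop) (f : V -> W) : Prop :=
  forall x, X x -> exists g : V -> W,
    \forall y \near x, differentiable g y /\
                       (X y -> Y (g y) /\ eY (g y) (f y)).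

Definition quot_biholomorphic (R : realType) (V W : normedModType (C R))
  (X : set V) (eX : V -> V -> Prop) (Y : set W) (eY : W -> W -> Prop) : Prop :=
  exists (f : V -> W) (g : W -> V),
    [/\ qwell_defined X eX Y eY f, qwell_defined Y eY X eX g,
        qholomorphic X Y eY f, qholomorphic Y X eX g &
        ((forall x, X x -> eX (g (f x)) x) /\
         (forall y, Y y -> eY (f (g y)) y))].

(* Main.v *)
Require Import Defs.
From mathcomp Require Import all_boot all_order all_algebra.
From mathcomp Require Import all_classical all_reals all_analysis.
From mathcomp Require Import complex.
From mathcomp Require Import ring lra.
Import numFieldNormedType.Exports.
Import Order.TTheory GRing.Theory Num.Theory.
Set Implicit Arguments.
Unset Strict Implicit.
Unset Printing Implicit Defensive.
Local Open Scope ring_scope.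
Local Open Scope classical_set_scope.


Section Toolkit.
Variable R : realType.
Local Notation K := (C R).

Definition nr (x : K) : R := Num.sqrt (complex.Re x ^+ 2 + complex.Im x ^+ 2).

Lemma nrE (x : K) : `|x| = (nr x)%:C%C.
Proof. exact: normc_def. Qed.

Lemma nr_ge0 x : 0 <= nr x.
Proof. exact: sqrtr_ge0. Qed.

Lemma nrM x y : nr (x * y) = nr x * nr y.
Proof.
have := normrM x y; rewrite !nrE => /(congr1 (@complex.Re R)) /=.
by rewrite mulr0 subr0.
Qed.

Lemma nrD x y : nr (x + y) <= nr x + nr y.
Proof. by rewrite -lecR rmorphD /= -!nrE ler_normD. Qed.

Lemma nrN x : nr (- x) = nr x.
Proof. by have := normrN x; rewrite !nrE => -[]. Qed.

Lemma nrB x y : nr (x - y) = nr (y - x).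
Proof. by rewrite -nrN opprB. Qed.

Lemma nr_eq0 x : (nr x == 0) = (x == 0).
Proof. by rewrite -[in RHS]normr_eq0 nrE -[0 : K]/((0:R)%:C)%C (inj_eq (@complexI R)). Qed.

Lemma nr_gt0 x : x != 0 -> 0 < nr x.
Proof. by move=> x0; rewrite lt_neqAle nr_ge0 andbT eq_sym nr_eq0. Qed.

Lemma nrV x : nr (x^-1) = (nr x)^-1.
Proof. by have := normfV x; rewrite !nrE -fmorphV => /complexI. Qed.

Lemma nrC (a : R) : nr (a%:C)%C = `|a|.
Proof. by rewrite /nr /= expr0n /= addr0 sqrtr_sqr. Qed.

Lemma nr_Re x : `|complex.Re x| <= nr x.
Proof.
rewrite /nr -sqrtr_sqr; apply: ler_wsqrtr; rewrite lerDl; exact: sqr_ge0.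
Qed.

Lemma nr_Im x : `|complex.Im x| <= nr x.
Proof.
rewrite /nr -sqrtr_sqr; apply: ler_wsqrtr; rewrite lerDr; exact: sqr_ge0.
Qed.

Lemma nr_le_ReIm x : nr x <= `|complex.Re x| + `|complex.Im x|.
Proof.
case: x => a b; rewrite /nr /=.
rewrite -(ger0_norm (addr_ge0 (normr_ge0 a) (normr_ge0 b))) -sqrtr_sqr.
apply: ler_wsqrtr.
have ha : a ^+ 2 = `|a| ^+ 2 by rewrite real_normK // num_real.
have hb : b ^+ 2 = `|b| ^+ 2 by rewrite real_normK // num_real.
rewrite ha hb; have := normr_ge0 a; have := normr_ge0 b; nra.
Qed.

Lemma ltC (x : K) (e : R) : (`|x| < e%:C%C) = (nr x < e).
Proof. by rewrite nrE ltcR. Qed.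

Lemma Kpos (e : K) : 0 < e -> e = (complex.Re e)%:C%C /\ 0 < complex.Re e.
Proof.
case: e => a b; rewrite ltcE /= => /andP[/eqP -> a0]; split => //.
Qed.

Lemma cvgK_eps (T : Type) (F : set_system T) {FF : Filter F} (f : T -> K) (l : K) :
  f @ F --> l <-> (forall e : R, 0 < e -> \forall t \near F, nr (f t - l) < e).
Proof.
rewrite cvgrPdist_lt; split.
- move=> H e e0; have : (0 : K) < e%:C%C by rewrite ltcR.
  move=> /H; apply: filterS => t; by rewrite ltC nrB.
- move=> H e /Kpos [-> e0]; apply: filterS (H _ e0) => t.
  by rewrite ltC nrB.
Qed.

End Toolkit.
Lemma near0P {K : numFieldType} (P : K -> Prop) :
  (\forall h \near 0^', P h) -> exists2 d : K, 0 < d & forall h, `|h| < d -> h != 0 -> P h.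
Proof.
move=> /nbhs_norm0P [d d0 H]; by exists d => // h hd h0; apply: (H h) => //=; rewrite ?sub0r ?normrN.
Qed.

Lemma deriv_eps {R : realType} (f : R -> R) (x d : R) : is_derive x (1 : R) f d ->
  forall e, 0 < e -> exists2 del, 0 < del &
    forall y, `|y| < del -> `|f (y + x) - f x - y * d| <= e * `|y|.
Proof.
move=> [Hd <-] e e0.
have := Hd; move/cvgrPdist_lt => /(_ e e0) /near0P [del del0 H].
exists del => // y yd; have [->|y0] := eqVneq y 0.
  by rewrite add0r subrr mul0r subr0 normr0 mulr0.
have := H y yd y0; rewrite /= /shift /= [_%:A]mulr1.
rewrite -/(derive f x 1) => Hy.
set F := f (y + x) - f x.
have -> : F - y * 'D_1 f x = - y * ('D_1 f x - y^-1 *: F).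
  by rewrite /GRing.scale /=; field.
rewrite normrM normrN mulrC ler_wpM2r //; exact: ltW.
Qed.


Section Exp.
Variable R : realType.
Local Notation K := (C R).

Definition E (z : K) : K :=
  ((expR (complex.Re z) * cos (complex.Im z)) +i* (expR (complex.Re z) * sin (complex.Im z)))%C.

Lemma E_add (z w : K) : E (z + w) = E z * E w.
Proof.
case: z => a b; case: w => c d; rewrite /E /=.
rewrite expRD cosD sinD; apply/eqP; rewrite eq_complex /=; apply/andP; split; apply/eqP; ring.
Qed.

Lemma E_real (a : R) : E (a%:C)%C = (expR a)%:C%C.
Proof. by rewrite /E /= cos0 sin0 mulr1 mulr0. Qed.

Lemma E0 : E 0 = 1.
Proof. by rewrite -[0 : K]/((0:R)%:C)%C E_real expR0. Qed.

Lemma E_neq0 z : E z != 0.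
Proof.
apply/negP => /eqP Ez.
have : E z * E (- z) = 1 by rewrite -E_add subrr E0.
by rewrite Ez mul0r => /eqP; rewrite eq_sym oner_eq0.
Qed.

Lemma E_lim0 (e : R) : 0 < e -> exists2 d : R, 0 < d &
  forall h : K, h != 0 -> nr h < d -> nr ((E h - 1) / h - 1) < e.
Proof.
move=> e0.
pose ep := Num.min 1 (e / 10).
have ep0 : 0 < ep by rewrite lt_min ltr01 divr_gt0.
have ep1 : ep <= 1 by rewrite ge_min lexx.
have epe : ep <= e / 10 by rewrite ge_min lexx orbT.
have [d1 d10 H1] := deriv_eps (is_derive_expR (0 : R)) ep0.
have [d2 d20 H2] := deriv_eps (is_derive_cos (0 : R)) ep0.
have [d3 d30 H3] := deriv_eps (is_derive_sin (0 : R)) ep0.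
exists (Num.min (Num.min d1 d2) (Num.min d3 ep)); first by rewrite !lt_min d10 d20 d30 ltr01 divr_gt0.
move=> h h0; rewrite !lt_min => /andP[/andP[hd1 hd2] /andP[hd3 hep]].
have N0 := nr_gt0 h0.
case: h h0 N0 hd1 hd2 hd3 hep => a b h0 N0 hd1 hd2 hd3 hep.
set N := nr (a +i* b)%C in N0 hd1 hd2 hd3 hep *.
have aN : `|a| <= N by have := nr_Re (a +i* b)%C.
have bN : `|b| <= N by have := nr_Im (a +i* b)%C.
have X1 := H1 a (le_lt_trans aN hd1).
have X2 := H2 b (le_lt_trans bN hd2).
have X3 := H3 b (le_lt_trans bN hd3).
have hNep : N < ep by rewrite lt_min.
rewrite !addr0 ?expR0 ?cos0 ?sin0 ?oppr0 ?mulr1 ?mulr0 ?subr0 in X1.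
rewrite !addr0 ?expR0 ?cos0 ?sin0 ?oppr0 ?mulr1 ?mulr0 ?subr0 in X2.
rewrite !addr0 ?expR0 ?cos0 ?sin0 ?oppr0 ?mulr1 ?mulr0 ?subr0 ?addr0 in X3.
have key : nr (E (a +i* b)%C - 1 - (a +i* b)%C) <= 9 * ep * N.
  apply: (le_trans (nr_le_ReIm _)).
  rewrite /E /=. rewrite !subr0.
  set ea := expR a.
  have a1 : `|a| <= 1 by apply: (le_trans aN); apply: ltW; apply: (lt_le_trans hNep).
  have ea3 : `|ea| <= 3.
    have X : `|ea - 1 - a| <= `|a|.
      by apply: (le_trans X1); rewrite ler_piMl.
    have := ler_normD (ea - 1 - a) (1 + a).
    have -> : ea - 1 - a + (1 + a) = ea by ring.
    move=> Y1; have := ler_normD 1 a; rewrite normr1 => Y; lra.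
  have ea1 : `|ea - 1| <= 2 * `|a|.
    have := ler_normD (ea - 1 - a) a; rewrite subrK => /le_trans; apply.
    have : ep * `|a| <= `|a| by rewrite ler_piMl.
    lra.
  have sb : `|sin b| <= 2 * `|b|.
    have := ler_normD (sin b - b) b; rewrite subrK => /le_trans; apply.
    have : ep * `|b| <= `|b| by rewrite ler_piMl.
    lra.
  have re : `|ea * cos b - 1 - a| <= ep * `|a| + 3 * (ep * `|b|).
    have -> : ea * cos b - 1 - a = (ea - 1 - a) + ea * (cos b - 1) by ring.
    apply: (le_trans (ler_normD _ _)); apply: lerD => //.
    by rewrite normrM; apply: ler_pM.
  have im : `|ea * sin b - b| <= 4 * ep * `|a| + ep * `|b|.
    have -> : ea * sin b - b = (ea - 1) * sin b + (sin b - b) by ring.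
    apply: (le_trans (ler_normD _ _)); apply: lerD => //.
    rewrite normrM.
    apply: (le_trans (ler_pM _ _ ea1 sb)) => //.
    have : `|b| <= ep by apply: (le_trans bN); apply: ltW.
    have := normr_ge0 a; have := normr_ge0 b; nra.
  have := normr_ge0 a; have := normr_ge0 b; nra.
have -> : (E (a +i* b)%C - 1) / (a +i* b)%C - 1 = (E (a +i* b)%C - 1 - (a +i* b)%C) / (a +i* b)%C.
  by field.
rewrite nrM nrV -/N.
rewrite ltr_pdivrMr //.
apply: (le_lt_trans key).
have : ep * N <= e / 10 * N by rewrite ler_pM2r.
have : 0 < e * N by rewrite mulr_gt0.
lra.
Qed.


End Exp.


Section Diff.
Variable R : realType.
Local Notation K := (C R).

Lemma near_nr (x : K) (e : R) : 0 < e -> \forall y \near x, nr (x - y) < e.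
Proof.
move=> e0; apply/nbhs_normP; exists (e%:C)%C; first by rewrite /= ltcR.
by move=> y /=; rewrite ltC.
Qed.

Lemma near_nrP (x : K) (P : K -> Prop) : (\forall y \near x, P y) ->
  exists2 d : R, 0 < d & forall y, nr (x - y) < d -> P y.
Proof.
move=> /nbhs_normP [d /Kpos [dE d0] H]; exists (complex.Re d) => // y yd.
by apply: H => /=; rewrite dE ltC.
Qed.

Lemma diff_eps (f : K -> K) (x D : K) :
  (forall e : R, 0 < e -> exists2 d : R, 0 < d &
     forall h : K, h != 0 -> nr h < d -> nr ((f (x + h) - f x) / h - D) < e) ->
  differentiable f x.
Proof.
move=> H; apply/derivable1_diffP; apply/cvg_ex; exists D.
apply/cvgK_eps => e e0; have [d d0 Hd] := H e e0.
near=> h.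
have h0 : h != 0 by near: h; exact: (@nbhs_dnbhs_neq K 0).
have hd : nr h < d.
  near: h; have dp : (0 : K) < (d%:C)%C by rewrite ltcR.
  have := @dnbhs0_lt K K _ dp; apply: filterS => h; by rewrite ltC.
have := Hd h h0 hd; rewrite /= /shift /= [_%:A]mulr1 [h + x]addrC.
by rewrite -[h^-1 *: _]/(h^-1 * _) mulrC nrB.
Unshelve. all: by end_near.
Qed.

Lemma E_limz (z : K) (e : R) : 0 < e -> exists2 d : R, 0 < d &
  forall h : K, h != 0 -> nr h < d -> nr ((E (z + h) - E z) / h - E z) < e.
Proof.
move=> e0.
have Nz := nr_gt0 (E_neq0 z).
have [d d0 H] := E_lim0 (divr_gt0 e0 Nz).
exists d => // h h0 hd.
have -> : (E (z + h) - E z) / h - E z = E z * ((E h - 1) / h - 1).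
  by rewrite E_add; field.
have Nz0 : nr (E z) != 0 := lt0r_neq0 Nz.
rewrite nrM; have := H h h0 hd; rewrite -(ltr_pM2l Nz).
by have -> : nr (E z) * (e / nr (E z)) = e by field.
Qed.

Lemma E_diff (z : K) : differentiable (@E R) z.
Proof.
apply: (diff_eps (D := E z)) => e e0; exact: E_limz.
Qed.

End Diff.


Section Log.
Variable R : realType.
Local Notation K := (C R).

Lemma ReB (x y : K) : complex.Re (x - y) = complex.Re x - complex.Re y.
Proof. by case: x => a b; case: y => c d; simpc. Qed.
Lemma ImB (x y : K) : complex.Im (x - y) = complex.Im x - complex.Im y.
Proof. by case: x => a b; case: y => c d; simpc. Qed.

Lemma Re_cvg (T : Type) (F : set_system T) {FF : Filter F} (f : T -> K) (l : K) :
  f @ F --> l -> (fun t => complex.Re (f t)) @ F --> complex.Re l.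
Proof.
move/cvgK_eps => H; apply/cvgrPdist_lt => e e0.
apply: filterS (H e e0) => t Ht.
by rewrite -ReB; apply: le_lt_trans (nr_Re _) _; rewrite nrB.
Qed.

Lemma Im_cvg (T : Type) (F : set_system T) {FF : Filter F} (f : T -> K) (l : K) :
  f @ F --> l -> (fun t => complex.Im (f t)) @ F --> complex.Im l.
Proof.
move/cvgK_eps => H; apply/cvgrPdist_lt => e e0.
apply: filterS (H e e0) => t Ht.
by rewrite -ImB; apply: le_lt_trans (nr_Im _) _; rewrite nrB.
Qed.

Lemma nr_cvg (T : Type) (F : set_system T) {FF : Filter F} (f : T -> K) (l : K) :
  f @ F --> l -> (fun t => nr (f t)) @ F --> nr l.
Proof.
move/cvgK_eps => H; apply/cvgrPdist_lt => e e0.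
apply: filterS (H e e0) => t Ht.
have := nrD (f t - l) l; rewrite subrK.
have := nrD (l - f t) (f t); rewrite subrK nrB.
move=> h1 h2; rewrite ltr_norml; apply/andP; split; lra.
Qed.

Lemma mkC_cvg (T : Type) (F : set_system T) {FF : Filter F} (u w : T -> R) (a b : R) :
  u @ F --> a -> w @ F --> b -> (fun t => (u t +i* w t)%C : K) @ F --> ((a +i* b)%C : K).
Proof.
move=> /cvgrPdist_lt Hu /cvgrPdist_lt Hw; apply/cvgK_eps => e e0.
have e2 : 0 < e / 2 by rewrite divr_gt0.
apply: filterS2 (Hu _ e2) (Hw _ e2) => t h1 h2.
apply: (le_lt_trans (nr_le_ReIm _)).
rewrite ReB ImB /= -normrN opprB -[`|w t - b|]normrN opprB; lra.
Qed.

Definition Lg (t : K) : K :=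
  (ln (nr t) +i* atan (complex.Im t / complex.Re t))%C.

Lemma Lg_cvg (t : K) : 0 < complex.Re t -> Lg s @[s --> t] --> Lg t.
Proof.
move=> t0.
have tn0 : t != 0 by apply: contraTneq t0 => ->; rewrite ltxx.
have Hn : nr s @[s --> t] --> nr t := nr_cvg (FF := nbhs_filter t) (@cvg_id K (nbhs t)).
have h1 : ln (nr s) @[s --> t] --> ln (nr t).
  exact: (cvg_comp _ _ Hn (continuous_ln (nr_gt0 tn0))).
have Hi : complex.Im s @[s --> t] --> complex.Im t := Im_cvg (FF := nbhs_filter t) (@cvg_id K (nbhs t)).
have Hr : complex.Re s @[s --> t] --> complex.Re t := Re_cvg (FF := nbhs_filter t) (@cvg_id K (nbhs t)).
have Hq : (complex.Im s / complex.Re s) @[s --> t] --> complex.Im t / complex.Re t.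
  exact: (cvgM Hi (cvgV (lt0r_neq0 t0) Hr)).
have h2 : atan (complex.Im s / complex.Re s) @[s --> t] --> atan (complex.Im t / complex.Re t).
  exact: (cvg_comp _ _ Hq (@continuous_atan R _)).
exact: (mkC_cvg h1 h2).
Qed.

Lemma EL (t : K) : 0 < complex.Re t -> E (Lg t) = t.
Proof.
case: t => x y /= x0.
have tn0 : (x +i* y)%C != 0 :> K by apply: contraTneq x0 => -[-> _]; rewrite ltxx.
have N0 := nr_gt0 tn0.
rewrite /E /Lg /= (lnK N0).
set u := y / x.
set s := Num.sqrt (1 + u ^+ 2).
have s0 : 0 < s by rewrite sqrtr_gt0; have := sqr_ge0 u; lra.
have ca : cos (atan u) = s^-1 by rewrite cos_atan.
have sa : sin (atan u) = u * s^-1.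
  have sn0 : s != 0 := lt0r_neq0 s0.
  have sin0 : s^-1 != 0 by rewrite invr_eq0.
  have := atanK u; rewrite /tan ca => Hu.
  by rewrite -[in RHS]Hu invrK mulfK.
have Ns : nr (x +i* y)%C = x * s.
  rewrite /nr /= /s.
  have -> : x ^+ 2 + y ^+ 2 = x ^+ 2 * (1 + u ^+ 2).
    rewrite /u; field; exact: lt0r_neq0.
  by rewrite sqrtrM ?sqr_ge0 // sqrtr_sqr ger0_norm // ltW.
have sn0 : s != 0 := lt0r_neq0 s0.
have xn0 : x != 0 := lt0r_neq0 x0.
rewrite ca sa Ns; congr (_ +i* _)%C; rewrite /u; field; by rewrite ?sn0 ?xn0.
Qed.

End Log.


Section LogDiff.
Variable R : realType.
Local Notation K := (C R).

Lemma ReD (x y : K) : complex.Re (x + y) = complex.Re x + complex.Re y.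
Proof. by case: x => a b; case: y => c d; simpc. Qed.

Lemma Lg_diff (t : K) : 0 < complex.Re t -> differentiable (@Lg R) t.
Proof.
move=> t0.
have tn0 : t != 0 by apply: contraTneq t0 => ->; rewrite ltxx.
have N0 := nr_gt0 tn0.
set N := nr t in N0.
apply: (diff_eps (D := t^-1)) => e e0.
pose ep := Num.min (N / 2) (e * N ^+ 2 / 4).
have ep0 : 0 < ep by rewrite lt_min !divr_gt0 ?mulr_gt0 ?exprn_gt0.
have ep1 : ep <= N / 2 by rewrite ge_min lexx.
have ep2 : ep <= e * N ^+ 2 / 4 by rewrite ge_min lexx orbT.
have [d' d'0 HE] := E_limz (Lg t) ep0.
have := Lg_cvg t0; move/cvgK_eps => /(_ d' d'0) /near_nrP [d1 d10 H1].
exists (Num.min d1 (complex.Re t)); first by rewrite lt_min d10 t0.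
move=> h h0; rewrite lt_min => /andP[hd1 hRe].
have s0 : 0 < complex.Re (t + h).
  rewrite ReD; have := nr_Re h; rewrite ler_norml => /andP[+ _]; lra.
have k_lt : nr (Lg (t + h) - Lg t) < d'.
  by apply: H1; rewrite opprD addrA subrr add0r nrN.
set k := Lg (t + h) - Lg t in k_lt *.
have Es : E (Lg t + k) = t + h by rewrite /k addrC subrK EL.
have Et : E (Lg t) = t := EL t0.
have k0 : k != 0.
  apply: contra_neq h0 => k0; move: Es; rewrite k0 addr0 Et => /eqP.
  by rewrite addrC -subr_eq subrr eq_sym => /eqP.
have := HE k k0 k_lt; rewrite Es Et.
have -> : t + h - t = h by rewrite addrC addKr.
set Q := h / k => HQ.
have Q0 : Q != 0 by rewrite /Q mulf_neq0 // invr_eq0.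
have NQ : N / 2 <= nr Q.
  have := nrD (t - Q) Q; rewrite subrK -/N nrB; lra.
have QN : 0 < nr Q * N by rewrite mulr_gt0 // nr_gt0.
have -> : k / h - t^-1 = (t - Q) / (Q * t).
  by rewrite /Q; field; rewrite ?h0 ?k0 ?tn0.
rewrite nrM nrV nrM -/N ltr_pdivrMr //.
rewrite nrB.
have : e * (N / 2) * N <= e * (nr Q * N).
  by rewrite -mulrA ler_pM2l // ler_pM2r.
have : e * N ^+ 2 / 4 < e * (N / 2) * N.
  have : 0 < e * N ^+ 2 by rewrite mulr_gt0 // exprn_gt0.
  rewrite expr2; lra.
lra.
Qed.

End LogDiff.


Section Disc.
Variable R : realType.
Local Notation K := (C R).

Lemma nr_lt1 (a b : R) : nr ((a +i* b)%C : K) < 1 -> a ^+ 2 + b ^+ 2 < 1.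
Proof.
rewrite /nr /= => h.
have h' : Num.sqrt (a ^+ 2 + b ^+ 2) < Num.sqrt 1 by rewrite sqrtr1.
by move: h'; rewrite ltr_sqrt // ltr01.
Qed.

Lemma lt1_nr (a b : R) : a ^+ 2 + b ^+ 2 < 1 -> nr ((a +i* b)%C : K) < 1.
Proof. by move=> h; rewrite /nr /= -sqrtr1 ltr_sqrt // ltr01. Qed.

Lemma Re_neq0 (x : K) : complex.Re x != 0 -> x != 0.
Proof. by apply: contra => /eqP ->. Qed.

Lemma two_neq0 : (2 : K) != 0.
Proof. by rewrite pnatr_eq0. Qed.

Lemma disc_neq (v : K) (r : R) : nr v < 1 -> 1 <= `|r| -> (r%:C)%C + v != 0.
Proof.
case: v => a b /nr_lt1 ab r1; apply: Re_neq0; simpc => /=.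
apply/negP => /eqP ra.
have : r = - a by lra.
move=> rE; rewrite rE normrN in r1.
have : 1 <= a ^+ 2 by rewrite -[a ^+ 2]real_normK ?num_real // -(expr1n _ 2) lerXn2r // ?nnegrE.
have := sqr_ge0 b; lra.
Qed.

Lemma disc_neqB (v : K) (r : R) : nr v < 1 -> 1 <= `|r| -> (r%:C)%C - v != 0.
Proof. by move=> hv r1; apply: disc_neq => //; rewrite nrN. Qed.

Lemma two_plus (v : K) : nr v < 1 -> 2 + v != 0.
Proof.
move=> hv; have := @disc_neq v 2 hv; rewrite rmorph_nat; apply.
by rewrite ger0_norm // ler1n.
Qed.

Lemma two_minus (v : K) : nr v < 1 -> 2 - v != 0.
Proof.
move=> hv; have := @disc_neqB v 2 hv; rewrite rmorph_nat; apply.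
by rewrite ger0_norm // ler1n.
Qed.

Lemma one_minus (v : K) : nr v < 1 -> 1 - v != 0.
Proof.
move=> hv; have := @disc_neqB v 1 hv; rewrite rmorph1; apply.
by rewrite normr1.
Qed.

Lemma phi_alt (v : K) : nr v < 1 -> phi v = (2 * v + 1) / (2 + v).
Proof.
move=> hv; have h2 := two_plus hv; have t2 := @two_neq0.
by rewrite /phi; field; rewrite ?h2 ?t2.
Qed.

Lemma phi_inv_alt (v : K) : nr v < 1 -> phi_inv v = (2 * v - 1) / (2 - v).
Proof.
move=> hv; have h2 := two_minus hv; have t2 := @two_neq0.
by rewrite /phi_inv; field; rewrite ?h2 ?t2.
Qed.

Lemma phi_disc (v : K) : nr v < 1 -> nr (phi v) < 1.
Proof.
move=> hv; rewrite phi_alt // nrM nrV ltr_pdivrMr ?nr_gt0 ?two_plus // mul1r.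
case: v hv => a b /nr_lt1 hv.
rewrite /nr; simpc; rewrite /= ltr_sqrt; last first.
  by rewrite ltr_pwDl ?sqr_ge0 // exprn_gt0 //; nra.
nra.
Qed.

Lemma phi_inv_disc (v : K) : nr v < 1 -> nr (phi_inv v) < 1.
Proof.
move=> hv; rewrite phi_inv_alt // nrM nrV ltr_pdivrMr ?nr_gt0 ?two_minus // mul1r.
case: v hv => a b /nr_lt1 hv.
rewrite /nr; simpc; rewrite /= ltr_sqrt; last first.
  by rewrite ltr_pwDl ?sqr_ge0 // exprn_gt0 //; nra.
nra.
Qed.

Lemma phi_phi_inv (v : K) : nr v < 1 -> phi (phi_inv v) = v.
Proof.
move=> hv; have h2 := two_minus hv; have t2 := @two_neq0.
rewrite phi_alt ?phi_inv_disc // phi_inv_alt //.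
field; rewrite h2 /=.
have -> : 2 * (2 - v) + (2 * v - 1) = 3 :> K by ring.
by rewrite pnatr_eq0.
Qed.

End Disc.


Section Lam.
Variable R : realType.
Local Notation K := (C R).

Definition Tm (v : K) : K := (1 + v) / (1 - v).

Lemma T_phi (v : K) : nr v < 1 -> Tm (phi v) = 3 * Tm v.
Proof.
move=> hv; have h2 := two_plus hv; have h1 := one_minus hv.
by rewrite /Tm phi_alt //; field; rewrite h1 h2.
Qed.

Lemma ReT (v : K) : nr v < 1 -> 0 < complex.Re (Tm v).
Proof.
case: v => a b /nr_lt1 hv; rewrite /Tm; simpc; rewrite /=.
have a1 : a < 1 by nra.
have D0 : 0 < (1 - a) ^+ 2 + (- b) ^+ 2.
  by rewrite ltr_pwDl ?sqr_ge0 // exprn_gt0 // subr_gt0.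
rewrite !mulrA -mulrBl divr_gt0 //; nra.
Qed.

Lemma Lg_scale (r : R) (t : K) : 0 < r -> 0 < complex.Re t ->
  Lg ((r%:C)%C * t) = Lg t + (ln r)%:C%C.
Proof.
move=> r0 t0; rewrite /Lg nrM nrC (ger0_norm (ltW r0)).
have tn0 : t != 0 by apply: contraTneq t0 => ->; rewrite ltxx.
rewrite lnM ?posrE ?nr_gt0 //.
case: t t0 tn0 => x y /= x0 tn0; simpc; rewrite /=.
congr (_ +i* _)%C; first by rewrite addrC.
rewrite ?addr0; congr atan; field.
by rewrite ?lt0r_neq0.
Qed.

Definition cc : R := ln 2 / ln 3.

Definition Lam (t : K) : K := E ((cc%:C)%C * Lg t).

Lemma Lam3 (t : K) : 0 < complex.Re t -> Lam (3 * t) = 2 * Lam t.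
Proof.
move=> t0; rewrite /Lam.
have -> : (3 : K) = ((3 : R)%:C)%C by rewrite rmorph_nat.
rewrite Lg_scale // mulrDr -rmorphM E_add E_real.
have l3 : ln (3 : R) != 0 by rewrite lt0r_neq0 // ln_gt0 // ltr1n.
have -> : cc * ln 3 = ln 2 by rewrite /cc mulfVK.
by rewrite lnK ?posrE // rmorph_nat mulrC.
Qed.

Lemma Lam_diff (t : K) : 0 < complex.Re t -> differentiable Lam t.
Proof.
move=> t0; exact: (differentiable_comp (differentiableZ (cc%:C)%C (Lg_diff t0)) (E_diff _)).
Qed.

Lemma Lam_neq0 t : Lam t != 0.
Proof. exact: E_neq0. Qed.

Lemma T_diff (v : K) : nr v < 1 -> differentiable Tm v.
Proof.
move=> hv.
have did : differentiable (@id K) v by apply/derivable1_diffP; exact: derivable_id.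
have d1 : differentiable (fun w : K => 1 + w) v.
  exact: (differentiableD (differentiable_cst (1 : K) v) did).
have d2 : differentiable (fun w : K => 1 - w) v.
  exact: (differentiableB (differentiable_cst (1 : K) v) did).
have d3 : differentiable (fun w : K => (1 - w)^-1) v.
  exact: (differentiableV d2 (one_minus hv)).
exact: (differentiableM d1 d3).
Qed.

Definition lam (v : K) : K := Lam (Tm v).

Lemma lam_diff (v : K) : nr v < 1 -> differentiable lam v.
Proof.
move=> hv; exact: (differentiable_comp (T_diff hv) (Lam_diff (ReT hv))).
Qed.

Lemma lam_neq0 v : lam v != 0.
Proof. exact: Lam_neq0. Qed.

Lemma lam_phi (v : K) : nr v < 1 -> lam (phi v) = 2 * lam v.
Proof. by move=> hv; rewrite /lam T_phi // Lam3 // ReT. Qed.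

Lemma lam_phi_inv (v : K) : nr v < 1 -> lam (phi_inv v) = lam v / 2.
Proof.
move=> hv; rewrite -{2}(phi_phi_inv hv) lam_phi ?phi_inv_disc //.
by rewrite [RHS]mulrC mulKf // two_neq0.
Qed.

Lemma phi_pow_disc (n : int) (v : K) : nr v < 1 -> nr (phi_pow n v) < 1.
Proof.
case: n => k hv /=.
  by elim: k => //= k IH; apply: phi_disc.
by elim: k => /= [|k IH]; apply: phi_inv_disc.
Qed.

Lemma lam_pow (n : int) (v : K) : nr v < 1 -> lam (phi_pow n v) = (2 : K) ^ n * lam v.
Proof.
move=> hv; case: n => k.
  rewrite -exprnP /=.
  elim: k => [|k IH] /=; first by rewrite expr0 mul1r.
  rewrite lam_phi ?IH ?exprS ?mulrA //.
  by have := phi_pow_disc (Posz k) hv.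
rewrite NegzE -exprnN /=.
elim: k => [|k IH] /=.
  by rewrite lam_phi_inv // expr1 mulrC.
rewrite lam_phi_inv; last by have := phi_pow_disc (Negz k) hv.
rewrite [iter _ _ _]/= in IH. rewrite IH.
by rewrite mulrAC -invfM -exprSr.
Qed.

End Lam.


Section Final.
Variable R : realType.
Local Notation K := (C R).
Local Notation V := 'rV[C R]_3.

Definition mk3 (a b c : K) : V := \row_(j < 3) nth 0 [:: a; b; c] j.

Lemma co_mk3 a b c : [/\ co (mk3 a b c) 0 = a, co (mk3 a b c) 1 = b & co (mk3 a b c) 2 = c].
Proof. by rewrite /co !mxE !inordK. Qed.

Lemma co0_mk3 a b c : co (mk3 a b c) 0 = a. Proof. by case: (co_mk3 a b c). Qed.
Lemma co1_mk3 a b c : co (mk3 a b c) 1 = b. Proof. by case: (co_mk3 a b c). Qed.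
Lemma co2_mk3 a b c : co (mk3 a b c) 2 = c. Proof. by case: (co_mk3 a b c). Qed.

Lemma mk3E a b c : mk3 a b c = a *: 'e_0 + b *: 'e_1 + c *: 'e_2.
Proof.
apply/rowP => j; rewrite !mxE.
by case: j => [[|[|[|]]]] //= _; rewrite ?mulr1 ?mulr0 ?addr0 ?add0r.
Qed.

Lemma diff_mk3 (F0 F1 F2 : V -> K) (p : V) :
  differentiable F0 p -> differentiable F1 p -> differentiable F2 p ->
  differentiable (fun q => mk3 (F0 q) (F1 q) (F2 q)) p.
Proof.
move=> d0 d1 d2.
have -> : (fun q => mk3 (F0 q) (F1 q) (F2 q)) =
  (fun q => F0 q *: 'e_0) + (fun q => F1 q *: 'e_1) + (fun q => F2 q *: 'e_2).
  by apply/funext => q; rewrite mk3E.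
apply: differentiableD; first apply: differentiableD.
- exact: differentiableZl.
- exact: differentiableZl.
- exact: differentiableZl.
Qed.

Lemma diff_co (k : nat) (p : V) : differentiable (fun q : V => co q k) p.
Proof. exact: differentiable_coord. Qed.

Lemma lt1C (x : K) : (`|x| < 1) = (nr x < 1).
Proof. by rewrite nrE -[1 : K]/((1 : R)%:C)%C ltcR. Qed.

Lemma near_disc (x : V) k : nr (co x k) < 1 -> \forall y \near x, nr (co y k) < 1.
Proof.
move=> hx.
have c := differentiable_continuous (diff_co k x).
have : 0 < 1 - nr (co x k) by rewrite subr_gt0.
move=> /(proj1 (cvgK_eps _ _) c); apply: filterS => y hy.
have := nrD (co y k - co x k) (co x k); rewrite subrK; lra.
Qed.

Definition fX (p : V) : V :=
  mk3 (co p 2) (co p 0 / lam (co p 2)) (co p 1 / lam (co p 2)).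
Definition gY (q : V) : V :=
  mk3 (lam (co q 0) * co q 1) (lam (co q 0) * co q 2) (co q 0).

Lemma fX_diff (p : V) : nr (co p 2) < 1 -> differentiable fX p.
Proof.
move=> hp; apply: diff_mk3; first exact: diff_co.
- apply: differentiableM; first exact: diff_co.
  apply: differentiableV; last exact: lam_neq0.
  exact: (differentiable_comp (diff_co 2 p) (lam_diff hp)).
- apply: differentiableM; first exact: diff_co.
  apply: differentiableV; last exact: lam_neq0.
  exact: (differentiable_comp (diff_co 2 p) (lam_diff hp)).
Qed.

Lemma gY_diff (q : V) : nr (co q 0) < 1 -> differentiable gY q.
Proof.
move=> hq; apply: diff_mk3; last exact: diff_co.
- apply: differentiableM; last exact: diff_co.
  exact: (differentiable_comp (diff_co 0 q) (lam_diff hq)).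
- apply: differentiableM; last exact: diff_co.
  exact: (differentiable_comp (diff_co 0 q) (lam_diff hq)).
Qed.

Lemma Yrel_refl (q : V) : Yrel q q.
Proof. by exists 0. Qed.

Lemma Xrel_refl (p : V) : Xrel p p.
Proof. by exists 0; rewrite expr0z !mul1r. Qed.

Lemma fX_Y (p : V) : Xdom p -> Ydom (fX p).
Proof.
move=> [hz hv]; rewrite /Ydom /fX /=; rewrite ?co0_mk3 ?co1_mk3 ?co2_mk3.
split => //; case: hz => h; [left|right]; by rewrite mulf_neq0 // invr_eq0 lam_neq0.
Qed.

Lemma gY_X (q : V) : Ydom q -> Xdom (gY q).
Proof.
move=> [hv hz]; rewrite /Xdom /gY /=; rewrite ?co0_mk3 ?co1_mk3 ?co2_mk3.
split => //; case: hz => h; [left|right]; by rewrite mulf_neq0 // lam_neq0.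
Qed.

Lemma fX_rel (p p' : V) : Xdom p -> Xrel p p' -> Yrel (fX p) (fX p').
Proof.
move=> [_ hv] [n [e0 e1 e2]]; exists n; rewrite /fX.
rewrite ?co0_mk3 ?co1_mk3 ?co2_mk3.
have hv' : nr (co p 2) < 1 by rewrite -lt1C.
have h2 : (2 : K) ^ n != 0 by rewrite expfz_neq0 // two_neq0.
have hl := lam_neq0 (co p 2).
rewrite e0 e1 e2 lam_pow //; split => //; field; by rewrite ?h2 ?hl.
Qed.

Lemma gY_rel (q q' : V) : Ydom q -> Yrel q q' -> Xrel (gY q) (gY q').
Proof.
move=> [hv _] [n [e0 e1 e2]]; exists n; rewrite /gY.
rewrite ?co0_mk3 ?co1_mk3 ?co2_mk3.
have hv' : nr (co q 0) < 1 by rewrite -lt1C.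
by rewrite e0 e1 e2 lam_pow //; split => //; rewrite mulrA.
Qed.

Lemma gf (p : V) : Xdom p -> Xrel (gY (fX p)) p.
Proof.
move=> _; exists 0; rewrite expr0z !mul1r /gY /fX.
rewrite ?co0_mk3 ?co1_mk3 ?co2_mk3.
have hl := lam_neq0 (co p 2).
by split => //; rewrite mulrC divfK.
Qed.

Lemma fg (q : V) : Ydom q -> Yrel (fX (gY q)) q.
Proof.
move=> _; exists 0; rewrite /gY /fX.
rewrite ?co0_mk3 ?co1_mk3 ?co2_mk3.
have hl := lam_neq0 (co q 0).
by split => //; rewrite mulrC mulKf.
Qed.

Lemma main : quot_biholomorphic (@Xdom R) (@Xrel R) (@Ydom R) (@Yrel R).
Proof.
exists fX, gY; split.
- split; [exact: fX_Y | move=> x x' hx _; exact: fX_rel].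
- split; [exact: gY_X | move=> y y' hy _; exact: gY_rel].
- move=> x hx; exists fX.
  have hv : nr (co x 2) < 1 by rewrite -lt1C; case: hx.
  near=> y; split.
    apply: fX_diff; near: y; exact: near_disc.
  by move=> Xy; split; [exact: fX_Y | exact: Yrel_refl].
- move=> y hy; exists gY.
  have hv : nr (co y 0) < 1 by rewrite -lt1C; case: hy.
  near=> z; split.
    apply: gY_diff; near: z; exact: near_disc.
  by move=> Yz; split; [exact: gY_X | exact: Xrel_refl].
- split; [exact: gf | exact: fg].
Unshelve. all: by end_near.
Qed.

End Final.

Unset Implicit Arguments.

Theorem theorem3p4 (R : realType) :
  quot_biholomorphic (@Xdom R) (@Xrel R) (@Ydom R) (@Yrel R).
Proof. exact: main. Qed.
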